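(* Let $X\in\mathbb{R}^n$ be a sub-Gaussian random vector with variance proxy $\sigma^2>0$. Then for any $\delta\in(0,1)$ and any $\varepsilon\in(0,1)$, $$\mathbb{P}\left(\|X\|\le \sigma\sqrt{\frac{\log\frac{1}{1-\varepsilon^2}}{\varepsilon^2}\,n+\frac{2}{\varepsilon^2}\log\frac{1}{\delta}}\right)\ge 1-\delta.$$
   Context: A random vector $X\in\mathbb{R}^n$ is sub-Gaussian with variance proxy $\sigma^2>0$ if $\mathbb{E}\left[e^{\lambda\langle \ell, X\rangle}\right]\le e^{\lambda^2\sigma^2/2}$ for all $\lambda\in\mathbb{R}$ and all $\ell\in\mathcal{S}^{n-1}=\{x\in\mathbb{R}^n:\|x\|=1\}$. $\|\cdot\|$ denotes the Euclidean norm. *)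

(* Defs.v *)
From mathcomp Require Import all_boot all_order all_algebra.
From mathcomp Require Import all_classical all_reals all_analysis.
Set Implicit Arguments. Unset Strict Implicit. Unset Printing Implicit Defensive.
Import Order.TTheory GRing.Theory Num.Theory.
Local Open Scope ring_scope.
Local Open Scope classical_set_scope.

Definition vnorm (R : realType) (n : nat) (x : 'I_n -> R) : R :=
  Num.sqrt (\sum_(i < n) x i ^+ 2).

Definition vdot (R : realType) (n : nat) (l x : 'I_n -> R) : R :=
  \sum_(i < n) l i * x i.

Definition subgaussian_vec (R : realType) (d : measure_display)
  (T : measurableType d) (P : probability T R) (n : nat)
  (X : 'I_n -> {RV P >-> R}) (sigma2 : R) : Prop :=
  forall (lam : R) (l : 'I_n -> R), vnorm l = 1 ->
    ('E_P[fun w => expR (lam * vdot l (fun i => X i w))]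
       <= (expR (lam ^+ 2 * sigma2 / 2))%:E)%E.

(* Main.v *)
Require Import Defs.
From mathcomp Require Import all_boot all_order all_algebra.
From mathcomp Require Import all_classical all_reals all_analysis.
From mathcomp Require Import measurable_realfun ring lra.
Import Order.TTheory GRing.Theory Num.Theory.
Local Open Scope ring_scope.
Local Open Scope classical_set_scope.
Lemma gauss_mgf (R : realType) (a : R) :
  (\int[@lebesgue_measure R]_g (expR (a * g) * normal_pdf 0 1 g)%:E = (expR (a ^+ 2 / 2))%:E)%E.
Proof.
transitivity (\int[@lebesgue_measure R]_g ((expR (a ^+ 2 / 2))%:E * (normal_pdf a 1 g)%:E))%E.
  apply: eq_integral => g _; rewrite -EFinM; congr EFin.
  rewrite /normal_pdf oner_eq0 /=.
  rewrite /normal_fun mulrCA [RHS]mulrCA -!expRD; congr (_ * expR _).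
  by rewrite expr1n; field.
rewrite integralZl//=; last exact: integrable_normal_pdf.
by rewrite integral_normal_pdf mule1.
Qed.
Lemma gauss_sq (R : realType) (e : R) : 0 < e < 1 ->
  (\int[@lebesgue_measure R]_g (expR (e ^+ 2 * g ^+ 2 / 2) * normal_pdf 0 1 g)%:E
   = ((Num.sqrt (1 - e ^+ 2))^-1)%:E)%E.
Proof.
case/andP => e0 e1.
set q := 1 - e ^+ 2.
have q0 : 0 < q by rewrite /q subr_gt0 expr_lt1 // ltW.
have sq0 : 0 < Num.sqrt q by rewrite sqrtr_gt0.
set s := (Num.sqrt q)^-1.
have s0 : s != 0 by rewrite invr_eq0 gt_eqF.
have s2 : s ^+ 2 = q^-1 by rewrite exprVn sqr_sqrtr // ltW.
transitivity (\int[@lebesgue_measure R]_g (s%:E * (normal_pdf 0 s g)%:E))%E.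
  apply: eq_integral => g _; rewrite -EFinM; congr EFin.
  rewrite /normal_pdf oner_eq0 (negbTE s0) /= /normal_fun /normal_peak.
  rewrite s2 expr1n mul1r -!mulrnAr sqrtrM; last by rewrite invr_ge0 ltW.
  rewrite sqrtrV; last exact: ltW.
  rewrite invfM invrK [RHS]mulrA (mulrA s) /s mulVf ?gt_eqF // mul1r.
  rewrite mulrCA -expRD; congr (_ * expR _).
  rewrite /q; field.
  by rewrite -/q gt_eqF.
rewrite integralZl//=; last exact: integrable_normal_pdf.
by rewrite integral_normal_pdf mule1.
Qed.

Definition Ssq {R : realType} {n : nat} (x : 'I_n -> R) k := \sum_(i < n | (i < k)%N) x i ^+ 2.

Lemma mSsq (R : realType) (d : measure_display) (T : measurableType d) (P : probability T R) n
  (X : 'I_n -> {RV P >-> R}) k :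
  measurable_fun setT (fun w => Ssq (fun i => X i w) k).
Proof.
have -> : (fun w => Ssq (fun i => X i w) k) =
  fun w => \sum_(i <- [seq i : 'I_n <- index_enum 'I_n | (i < k)%N]) X i w ^+ 2.
  by apply/funext => w; rewrite /Ssq big_filter.
apply: measurable_sum => i; apply: measurable_funX; exact: measurable_funPT.
Qed.

Lemma mvdot (R : realType) (d : measure_display) (T : measurableType d) (P : probability T R) n
  (X : 'I_n -> {RV P >-> R}) v :
  measurable_fun setT (fun w => vdot v (fun i => X i w)).
Proof.
apply: measurable_sum => i; apply: measurable_funM => //; exact: measurable_funPT.
Qed.

Lemma claim0 (R : realType) (d : measure_display) (T : measurableType d) (P : probability T R) n
  (X : 'I_n -> {RV P >-> R}) (sigma : R) :
  subgaussian_vec X (sigma ^+ 2) -> forall v : 'I_n -> R,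
  (\int[P]_w (expR (vdot v (fun i => X i w)))%:E
    <= (expR (sigma ^+ 2 * (\sum_i v i ^+ 2) / 2))%:E)%E.
Proof.
move=> hs v.
set N2 := \sum_i v i ^+ 2.
have N0 : 0 <= N2 by apply: sumr_ge0 => i _; exact: sqr_ge0.
have [Nz|Nnz] := eqVneq N2 0.
  have v0 : forall i, v i = 0.
    move=> i; apply/eqP; rewrite -sqrf_eq0; apply/eqP.
    exact: (psumr_eq0P (fun i _ => sqr_ge0 (v i)) Nz).
  rewrite Nz mulr0 mul0r expR0.
  have -> : (\int[P]_w (expR (vdot v (fun i => X i w)))%:E = \int[P]_w (cst 1%E) w)%E.
    apply: eq_integral => w _; rewrite /vdot big1 ?expR0 // => i _; by rewrite v0 mul0r.
  by rewrite integral_cst //= probability_setT mul1e.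
set r := Num.sqrt N2.
have r0 : 0 < r by rewrite sqrtr_gt0 lt_neqAle eq_sym Nnz N0.
have hl : vnorm (fun i => v i / r) = 1.
  rewrite /vnorm.
  under eq_bigr do rewrite expr_div_n.
  by rewrite -mulr_suml -/N2 /r sqr_sqrtr // divff // sqrtr1.
have := hs r _ hl; rewrite unlock.
have -> : r ^+ 2 = N2 by rewrite /r sqr_sqrtr.
move=> h; rewrite [sigma ^+ 2 * N2]mulrC; apply: (le_trans _ h); rewrite le_eqVlt; apply/orP; left; apply/eqP.
apply: eq_integral => w _; congr (EFin (expR _)).
rewrite /vdot mulr_sumr; apply: eq_bigr => i _.
by rewrite mulrA mulrCA mulfV ?gt_eqF // mulr1.
Qed.

Definition Gk {R : realType} {n : nat} (c : R) (k : nat) (v : 'I_n -> R) (i0 : 'I_n)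
  (x : 'I_n -> R) (g : R) :=
  expR (c ^+ 2 / 2 * Ssq x k + vdot v x + c * x i0 * g) * normal_pdf 0 1 g.

Definition vg {R : realType} {n : nat} (v : 'I_n -> R) (i0 : 'I_n) (a : R) :=
  fun i => if i == i0 then a else v i.

Lemma vdot_vg (R : realType) n (v x : 'I_n -> R) i0 a : v i0 = 0 ->
  vdot (vg v i0 a) x = vdot v x + a * x i0.
Proof.
move=> hv0; rewrite /vdot (bigD1 i0) //= [in RHS](bigD1 i0) //= /vg eqxx hv0 mul0r add0r.
rewrite addrC; congr (_ + _); apply: eq_bigr => i /negbTE -> //.
Qed.

Lemma N2_vg (R : realType) n (v : 'I_n -> R) i0 a : v i0 = 0 ->
  \sum_i (vg v i0 a) i ^+ 2 = \sum_i v i ^+ 2 + a ^+ 2.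
Proof.
move=> hv0; rewrite (bigD1 i0) //= [in RHS](bigD1 i0) //= /vg eqxx hv0 expr0n /= add0r.
rewrite addrC; congr (_ + _); apply: eq_bigr => i /negbTE -> //.
Qed.

Lemma Ssq_S (R : realType) n (x : 'I_n -> R) k (hk : (k < n)%N) :
  Ssq x k.+1 = Ssq x k + x (Ordinal hk) ^+ 2.
Proof.
rewrite /Ssq (bigD1 (Ordinal hk)) //= addrC; congr (_ + _).
apply: eq_bigl => i; rewrite -val_eqE /=.
case: (ltngtP (val i) k) => h; rewrite ?ltnS.
- by rewrite andbT ltnW.
- by rewrite andbT leqNgt h.
- by rewrite andbF.
Qed.

Lemma claim (R : realType) (d : measure_display) (T : measurableType d) (P : probability T R) n
  (X : 'I_n -> {RV P >-> R}) (sigma e : R) :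
  0 < sigma -> 0 < e < 1 -> subgaussian_vec X (sigma ^+ 2) ->
  forall k, (k <= n)%N -> forall v : 'I_n -> R, (forall i : 'I_n, (i < k)%N -> v i = 0) ->
  (\int[P]_w (expR ((e / sigma) ^+ 2 / 2 * Ssq (fun i => X i w) k + vdot v (fun i => X i w)))%:E
   <= (((Num.sqrt (1 - e ^+ 2))^-1) ^+ k * expR (sigma ^+ 2 * (\sum_i v i ^+ 2) / 2))%:E)%E.
Proof.
move=> s0 e01 hs; elim=> [|k IH] hk v hv.
  have S0 : forall x : 'I_n -> R, Ssq x 0 = 0.
    by move=> x; apply: big_pred0 => i; rewrite ltn0.
  under eq_integral do rewrite S0 mulr0 add0r.
  rewrite expr0 mul1r; exact: claim0.
have hkn : (k < n)%N := hk.
set i0 : 'I_n := Ordinal hkn.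
set c := e / sigma.
have hv0 : v i0 = 0 by apply: hv => /=.
have hrep : forall w, (expR (c ^+ 2 / 2 * Ssq (fun i => X i w) k.+1 + vdot v (fun i => X i w)))%:E =
   (\int[lebesgue_measure]_g (Gk c k v i0 (fun i => X i w) g)%:E)%E.
  move=> w.
  transitivity (\int[lebesgue_measure]_g
     ((expR (c ^+ 2 / 2 * Ssq (fun i => X i w) k + vdot v (fun i => X i w)))%:E *
      (expR ((c * X i0 w) * g) * normal_pdf 0 1 g)%:E))%E; last first.
    by apply: eq_integral => g _; rewrite -EFinM /Gk mulrA -expRD.
  rewrite ge0_integralZl_EFin //; try exact: expR_ge0.
  - rewrite gauss_mgf -EFinM -expRD; congr (EFin (expR _)).
    rewrite (Ssq_S _ _ _ _ hkn) -/i0; ring.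
  - by move=> g _; rewrite lee_fin mulr_ge0 // ?expR_ge0 // normal_pdf_ge0.
  - apply/measurable_EFinP; apply: measurable_funM; last exact: measurable_normal_pdf.
    apply: measurableT_comp => //; exact: measurable_funM.
under eq_integral do rewrite hrep.
set f := (fun z : T * R => (Gk c k v i0 (fun i => X i z.1) z.2)%:E).
have mf : measurable_fun setT f.
  apply/measurable_EFinP; rewrite /Gk; apply: measurable_funM.
    apply: measurableT_comp => //; apply: measurable_funD; first apply: measurable_funD.
    - apply: measurable_funM => //.
      have h := measurableT_comp (mSsq _ _ _ P _ X k) (@measurable_fst _ _ T R); exact: h.
    - have h := measurableT_comp (mvdot _ _ _ P _ X v) (@measurable_fst _ _ T R); exact: h.
    - apply: measurable_funM; last exact: measurable_snd.
      apply: measurable_funM => //.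
      have h := measurableT_comp (measurable_funPT (X i0)) (@measurable_fst _ _ T R); exact: h.
  have h := measurableT_comp (measurable_normal_pdf 0 1) (@measurable_snd _ _ T R); exact: h.
have f0 : forall z, (0 <= f z)%E.
  by move=> z; rewrite /f /Gk lee_fin mulr_ge0 // ?expR_ge0 // normal_pdf_ge0.
have FT : (\int[P]_w \int[lebesgue_measure]_g (Gk c k v i0 (fun i => X i w) g)%:E =
  \int[lebesgue_measure]_g \int[P]_w (Gk c k v i0 (fun i => X i w) g)%:E)%E.
  exact: (@fubini_tonelli _ _ _ _ _ P lebesgue_measure f mf f0).
rewrite FT.
set N2v := \sum_i v i ^+ 2.
set RHSf := fun g : R => (((Num.sqrt (1 - e ^+ 2))^-1 ^+ k * expR (sigma ^+ 2 * N2v / 2)) *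
   (expR (e ^+ 2 * g ^+ 2 / 2) * normal_pdf 0 1 g))%:E.
apply: (@le_trans _ _ (\int[lebesgue_measure]_g RHSf g)%E).
  apply: ge0_le_integral => //.
  - move=> g _; apply: integral_ge0 => w _; exact: (f0 (w, g)).
  - exact: (measurable_fun_fubini_tonelli_G f mf f0).
  - apply/measurable_EFinP; apply: measurable_funM => //.
    apply: measurable_funM; last exact: measurable_normal_pdf.
    apply: measurableT_comp => //; apply: measurable_funM => //.
    apply: measurable_funM => //; exact: exprn_measurable.
  move=> g _.
  have -> : (\int[P]_w (Gk c k v i0 (fun i => X i w) g)%:E =
    (normal_pdf 0 1 g)%:E * \int[P]_w (expR (c ^+ 2 / 2 * Ssq (fun i => X i w) k
        + vdot (vg v i0 (c * g)) (fun i => X i w)))%:E)%E.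
    rewrite -ge0_integralZl_EFin //; last exact: normal_pdf_ge0.
    - apply: eq_integral => w wT; rewrite /Gk -EFinM mulrC vdot_vg // addrA.
      by rewrite [c * g * _]mulrAC.
    - apply/measurable_EFinP; apply: measurableT_comp => //.
      apply: measurable_funD; last exact: mvdot.
      apply: measurable_funM => //; exact: mSsq.
  have hvan : forall i : 'I_n, (i < k)%N -> vg v i0 (c * g) i = 0.
    move=> i hi; rewrite /vg ifN; first exact: hv (ltnW hi).
    by rewrite -val_eqE /= ltn_eqF.
  apply: (le_trans (lee_wpmul2l _ (IH (ltnW hk) _ hvan))).
    by rewrite lee_fin normal_pdf_ge0.
  rewrite /RHSf -EFinM lee_fin le_eqVlt; apply/orP; left; apply/eqP.
  rewrite N2_vg // -/N2v.
  rewrite (_ : sigma ^+ 2 * (N2v + (c * g) ^+ 2) / 2 = sigma ^+ 2 * N2v / 2 + e ^+ 2 * g ^+ 2 / 2).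
    by rewrite expRD; ring.
  by rewrite /c; field; rewrite gt_eqF.
rewrite /RHSf.
under eq_integral do rewrite EFinM.
rewrite ge0_integralZl_EFin //.
- rewrite gauss_sq // -EFinM lee_fin [in leRHS]exprSr.
  by rewrite mulrAC.
- by move=> g _; rewrite lee_fin mulr_ge0 // ?expR_ge0 // normal_pdf_ge0.
- apply/measurable_EFinP; apply: measurable_funM; last exact: measurable_normal_pdf.
  apply: measurableT_comp => //; apply: measurable_funM => //.
  apply: measurable_funM => //; exact: exprn_measurable.
Qed.

Lemma sqrt_le_iff (R : realType) (x r : R) : 0 <= r -> (Num.sqrt x <= r) = (x <= r ^+ 2).
Proof.
move=> r0.
have -> : (Num.sqrt x <= r) = (Num.sqrt x <= Num.sqrt (r ^+ 2)) by rewrite sqrtr_sqr ger0_norm.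
by rewrite ler_sqrt // sqr_ge0.
Qed.

Theorem theorem2 (R : realType) (d : measure_display) (T : measurableType d)
  (P : probability T R) (n : nat) (X : 'I_n -> {RV P >-> R}) (sigma : R) :
  0 < sigma -> subgaussian_vec X (sigma ^+ 2) ->
  forall delta eps : R, 0 < delta < 1 -> 0 < eps < 1 ->
  ((1 - delta)%:E <=
    P [set w | (vnorm (fun i => X i w) <=
       sigma * Num.sqrt (ln (1 / (1 - eps ^+ 2)) / eps ^+ 2 * n%:R
                         + 2 / eps ^+ 2 * ln (1 / delta)))%R])%E.
Proof.
move=> s0 hs delta eps /andP[d0 d1] he.
have /andP[e0 e1] := he.
set q := 1 - eps ^+ 2.
have q0 : 0 < q by rewrite /q subr_gt0 expr_lt1 // ltW.
have q1 : q <= 1 by rewrite /q gerBl sqr_ge0.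
set Q := ln (1 / q) / eps ^+ 2 * n%:R + 2 / eps ^+ 2 * ln (1 / delta).
have Q0 : 0 <= Q.
  have l1 : 0 <= ln (1 / q) by apply: ln_ge0; rewrite div1r invf_ge1.
  have l2 : 0 <= ln (1 / delta) by apply: ln_ge0; rewrite div1r invf_ge1 // ltW.
  have ie : 0 <= eps ^+ 2 by exact: sqr_ge0.
  by rewrite /Q; apply: addr_ge0; apply: mulr_ge0 => //; apply: divr_ge0.
set r := sigma * Num.sqrt Q.
have r0 : 0 <= r by rewrite mulr_ge0 // ltW.
have vnE : forall w, vnorm (fun i => X i w) = Num.sqrt (Ssq (fun i => X i w) n).
  move=> w; rewrite /vnorm /Ssq; congr Num.sqrt; apply: eq_bigl => i; by rewrite ltn_ord.
set A := [set w | vnorm (fun i => X i w) <= r].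
have AE : A = [set w | Ssq (fun i => X i w) n <= r ^+ 2].
  rewrite /A; apply/seteqP; split => w /=; by rewrite vnE sqrt_le_iff.
have mA : measurable A.
  rewrite AE; have := measurable_fun_le measurableT (mSsq _ _ _ P _ X n) (measurable_cst (r ^+ 2)).
  by rewrite setTI.
set c := eps / sigma.
have hE := claim _ _ _ P _ X sigma eps s0 he hs n (leqnn n) (fun _ => 0) (fun _ _ => erefl).
have v0 : forall x, vdot (fun _ : 'I_n => (0:R)) x = 0.
  by move=> x; rewrite /vdot big1 // => i _; rewrite mul0r.
have z0 : \sum_(i < n) (0:R) ^+ 2 = 0 by rewrite big1 // => i _; rewrite expr0n.
move: hE; rewrite z0 mulr0 mul0r expR0 mulr1 => hE.
set K := expR (- (c ^+ 2 / 2 * r ^+ 2)).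
have hC : (P (~` A) <= delta%:E)%E.
  have -> : P (~` A) = (\int[P]_w (\1_(~` A) w)%:E)%E.
    by rewrite integral_indic ?setIT //; exact: measurableC.
  apply: (@le_trans _ _ (\int[P]_w (K * expR (c ^+ 2 / 2 * Ssq (fun i => X i w) n
       + vdot (fun _ => 0) (fun i => X i w)))%:E)%E).
    apply: ge0_le_integral => //.
    - apply/measurable_EFinP; apply: measurable_indic; exact: measurableC.
    - apply/measurable_EFinP; apply: measurable_funM => //.
      apply: measurableT_comp => //; apply: measurable_funD; last exact: mvdot.
      apply: measurable_funM => //; exact: mSsq.
    move=> w _; rewrite lee_fin indicE.
    case: (boolP (w \in ~` A)) => hw /=; last by rewrite mulr_ge0 // expR_ge0.
    have hw' : r ^+ 2 < Ssq (fun i => X i w) n.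
      rewrite ltNge -sqrt_le_iff // -vnE; apply/negP.
      by move: hw; rewrite in_setE.
    rewrite /K v0 addr0 -expRD; apply: le_trans (expR_ge1Dx _).
    rewrite lerDl -mulrN -mulrDr mulr_ge0 //.
      by rewrite divr_ge0 // sqr_ge0.
    by rewrite addrC subr_ge0 ltW.
  under eq_integral do rewrite EFinM.
  rewrite ge0_integralZl_EFin //; try exact: expR_ge0; last first.
    apply/measurable_EFinP; apply: measurableT_comp => //; apply: measurable_funD; last exact: mvdot.
    apply: measurable_funM => //; exact: mSsq.
  apply: le_trans (lee_wpmul2l _ hE) _; first by rewrite lee_fin expR_ge0.
  rewrite -EFinM lee_fin -/q.
  have hB : (Num.sqrt q)^-1 ^+ n = expR (n%:R * ln ((Num.sqrt q)^-1)).
    by rewrite expRM_natl lnK // posrE invr_gt0 sqrtr_gt0.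
  have L1 : ln (1 / q) = 2 * ln ((Num.sqrt q)^-1).
    have hsq : ln q = ln (Num.sqrt q) *+ 2 by rewrite -lnXn ?sqrtr_gt0 // sqr_sqrtr // ltW.
    rewrite div1r lnV ?posrE // lnV ?posrE ?sqrtr_gt0 // hsq mulr2n; lra.
  have L2 : ln (1 / delta) = - ln delta by rewrite div1r lnV ?posrE.
  rewrite hB /K -expRD.
  have -> : - (c ^+ 2 / 2 * r ^+ 2) + n%:R * ln ((Num.sqrt q)^-1) = ln delta.
    rewrite /r [(sigma * _) ^+ 2]exprMn sqr_sqrtr // /Q L1 L2 /c; field.
    by rewrite !gt_eqF.
  by rewrite lnK // posrE.
move: hC; rewrite probability_setC //.
move: (probability_le1 P mA) (measure_ge0 P A).
case: (P A) => [p| |] //= _ _.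
by rewrite -EFinB !lee_fin => h; lra.
Qed.
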